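(* Let $m\ge 2$, let $\mathbb{Z}_m$ be the cyclic group of order $m$ with generator $t$, and let $\Gamma$ be a group acting non-trivially on $\mathbb{Z}_m$ by automorphisms. Let $A$ be a $\mathbb{Z}_m\rtimes\Gamma$-module, put $W=\mathrm{Hom}_{\mathbb{Z}(\mathbb{Z}_m\rtimes\Gamma)}(\mathbb{Q}(\mathbb{Z}_m),A)$, and let $D^*,N^*:W\to W$ be induced by multiplication by $D=t+\dots+t^{m-1}-(m-1)$ and $N=1+t+\dots+t^{m-1}$ on $\mathbb{Q}(\mathbb{Z}_m)$. Then for every $n\ge1$ $${}_{\mathbb Q}H_\Gamma^{2n-1}(\mathbb{Z}_m,A)\cong \operatorname{Ker}N^*/\operatorname{Im}D^*,\qquad {}_{\mathbb Q}H_\Gamma^{2n}(\mathbb{Z}_m,A)\cong \operatorname{Ker}D^*/\operatorname{Im}N^*.$$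
   Context: For a $\Gamma$-group $G$, a $G\rtimes\Gamma$-module is an abelian group with $G$- and $\Gamma$-actions satisfying ${}^{\sigma}({}^{g}a)={}^{{}^{\sigma}g}({}^{\sigma}a)$. Let $B_*\to\mathbb{Z}$ be the bar resolution of $G$ ($B_0=\mathbb Z(G)$, $B_n$ free $\mathbb{Z}(G)$-module on symbols $[g_1,\dots,g_n]$) with $\Gamma$ acting by ${}^{\gamma}(g[g_1,\dots,g_n])={}^{\gamma}g[{}^{\gamma}g_1,\dots,{}^{\gamma}g_n]$, and $\Gamma$ acting trivially on $\mathbb{Q}$. The rational $\Gamma$-equivariant cohomology ${}_{\mathbb Q}H^n_\Gamma(G,A)$ is the $n$-th cohomology of the cochain complex $\mathrm{Hom}_{\mathbb{Z}(G\rtimes\Gamma)}(B_*\otimes\mathbb{Q},A)$. *)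

(* Defs.v *)
From HB Require Import structures.
From mathcomp Require Import all_boot all_order all_algebra.
Set Implicit Arguments. Unset Strict Implicit. Unset Printing Implicit Defensive.
Import GRing.Theory.
Local Open Scope ring_scope.

Definition is_group_action (Gam : groupType) (X : Type) (act : Gam -> X -> X) :=
  (forall x, act 1%g x = x) /\ (forall s t x, act (s * t)%g x = act s (act t x)).

Definition additive_map (U V : zmodType) (f : U -> V) :=
  forall x y, f (x + y) = f x + f y.

Definition acts_by_automorphisms (Gam : groupType) (m : nat)
  (actZ : Gam -> 'Z_m -> 'Z_m) :=
  is_group_action actZ /\ (forall s, additive_map (actZ s)).

Definition generates (m : nat) (t : 'Z_m) := forall g : 'Z_m, exists i : nat, g = t *+ i.

(* A is a Z_m ⋊ Gam-module: abelian group with Z_m- and Gam-actions (by additive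
   maps) satisfying  s(g a) = (s g)(s a). *)
Definition semidirect_module (Gam : groupType) (m : nat) (A : zmodType)
  (actZ : Gam -> 'Z_m -> 'Z_m) (actG : 'Z_m -> A -> A) (actA : Gam -> A -> A) :=
  [/\ (forall a, actG 0 a = a),
      (forall g h a, actG (g + h) a = actG g (actG h a)),
      (forall g, additive_map (actG g)),
      is_group_action actA /\ (forall s, additive_map (actA s)) &
      (forall s g a, actA s (actG g a) = actG (actZ s g) (actA s a))].

(* Isomorphism of subquotients  Z_X/B_X ≅ Z_Y/B_Y  of abelian groups (given by
   their addition/subtraction): an additive map f on Z_X with values in Z_Y
   inducing a well defined, injective and surjective map on the quotients. *)
Definition subquot_iso (X Y : Type) (addX : X -> X -> X) (addY subY : Y -> Y -> Y)
  (ZX BX : X -> Prop) (ZY BY : Y -> Prop) : Prop :=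
  exists f : X -> Y,
    [/\ (forall x, ZX x -> ZY (f x)),
        (forall x y, ZX x -> ZX y -> f (addX x y) = addY (f x) (f y)),
        (forall x, ZX x -> (BY (f x) <-> BX x)) &
        (forall y, ZY y -> exists x, ZX x /\ BY (subY y (f x)))].

Section Cohomology.
Variables (Gam : groupType) (m : nat) (A : zmodType).
Variables (actZ : Gam -> 'Z_m -> 'Z_m) (actG : 'Z_m -> A -> A) (actA : Gam -> A -> A).

(* Q-vector space with basis the symbols g[g_1,...,g_n] *)
Definition Bar (n : nat) := {ffun 'Z_m * {ffun 'I_n -> 'Z_m} -> rat}.

Definition bas (n : nat) (p : 'Z_m * {ffun 'I_n -> 'Z_m}) : Bar n :=
  [ffun q => (q == p)%:R].

Definition barG (n : nat) (h : 'Z_m) (x : Bar n) : Bar n :=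
  [ffun q => \sum_(p : 'Z_m * {ffun 'I_n -> 'Z_m}) x p * bas (h + p.1, p.2) q].

Definition barGam (n : nat) (s : Gam) (x : Bar n) : Bar n :=
  [ffun q => \sum_(p : 'Z_m * {ffun 'I_n -> 'Z_m}) x p * bas (actZ s p.1, [ffun i => actZ s (p.2 i)]) q].

(* face i of [g_1..g_{k+1}] (0-based list gs): i = 0 drops g_1, 1 <= i <= k merges
   g_i g_{i+1}, i = k+1 drops g_{k+1} *)
Definition face (k i : nat) (gs : {ffun 'I_k.+1 -> 'Z_m}) : {ffun 'I_k -> 'Z_m} :=
  [ffun j : 'I_k => if (j.+1 < i)%N then gs (inord j)
                    else if j.+1 == i then gs (inord j) + gs (inord j.+1)
                    else gs (inord j.+1)].

(* bar differential  d(g[g_1..g_{k+1}]) = g g_1[g_2..] + sum_{i=1}^k (-1)^i g[..,g_i g_{i+1},..]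
   + (-1)^{k+1} g[g_1..g_k], extended Q-linearly *)
Definition bd (k : nat) (x : Bar k.+1) : Bar k :=
  [ffun q => \sum_(p : 'Z_m * {ffun 'I_k.+1 -> 'Z_m}) x p *
     \sum_(i < k.+2) (-1) ^+ i *
        bas (if i == 0 :> nat then p.1 + p.2 (inord 0) else p.1, face i p.2) q].

Definition is_cochain (n : nat) (phi : Bar n -> A) :=
  [/\ additive_map phi,
      (forall h x, phi (barG h x) = actG h (phi x)) &
      (forall s x, phi (barGam s x) = actA s (phi x))].

Definition cochain_add (n : nat) (phi psi : Bar n -> A) : Bar n -> A :=
  fun x => phi x + psi x.

Definition is_cocycle (n : nat) (phi : Bar n -> A) :=
  is_cochain phi /\ (forall x : Bar n.+1, phi (bd x) = 0).

Definition is_coboundary (n : nat) : (Bar n -> A) -> Prop :=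
  match n return (Bar n -> A) -> Prop with
  | 0 => fun phi => forall x, phi x = 0
  | d.+1 => fun phi => exists psi : Bar d -> A, is_cochain psi /\ (forall x, phi x = psi (bd x))
  end.

Definition QZ := {ffun 'Z_m -> rat}.
Definition basQ (g : 'Z_m) : QZ := [ffun q => (q == g)%:R].
Definition trQ (h : 'Z_m) (x : QZ) : QZ := [ffun q => \sum_(g : 'Z_m) x g * basQ (h + g) q].
Definition gamQ (s : Gam) (x : QZ) : QZ := [ffun q => \sum_(g : 'Z_m) x g * basQ (actZ s g) q].

Definition is_W (w : QZ -> A) :=
  [/\ additive_map w,
      (forall h x, w (trQ h x) = actG h (w x)) &
      (forall s x, w (gamQ s x) = actA s (w x))].

Definition W_add (v w : QZ -> A) : QZ -> A := fun x => v x + w x.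
Definition W_sub (v w : QZ -> A) : QZ -> A := fun x => v x - w x.

Definition mulD (t : 'Z_m) (x : QZ) : QZ :=
  \sum_(1 <= i < m) trQ (t *+ i) x - [ffun g => (m.-1)%:R * x g].
Definition mulN (t : 'Z_m) (x : QZ) : QZ := \sum_(0 <= i < m) trQ (t *+ i) x.

Definition KerN (t : 'Z_m) (w : QZ -> A) := is_W w /\ (forall x, w (mulN t x) = 0).
Definition KerD (t : 'Z_m) (w : QZ -> A) := is_W w /\ (forall x, w (mulD t x) = 0).
Definition ImD (t : 'Z_m) (w : QZ -> A) :=
  exists v, is_W v /\ (forall x, w x = v (mulD t x)).
Definition ImN (t : 'Z_m) (w : QZ -> A) :=
  exists v, is_W v /\ (forall x, w x = v (mulN t x)).

End Cohomology.

(* Main.v *)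
Require Import Defs.
From HB Require Import structures.
From mathcomp Require Import all_boot all_order all_algebra.
From mathcomp Require Import ring.
From Stdlib Require Import FunctionalExtensionality.
Set Implicit Arguments. Unset Strict Implicit. Unset Printing Implicit Defensive.
Import GRing.Theory.
Local Open Scope ring_scope.

Definition sc (T : finType) (c : rat) (x : {ffun T -> rat}) : {ffun T -> rat} :=
  [ffun q => c * x q].

Definition lop (P Q : finType) (K : P -> {ffun Q -> rat}) (x : {ffun P -> rat})
  : {ffun Q -> rat} := [ffun q => \sum_p x p * K p q].

Definition ind (P : finType) (p : P) : {ffun P -> rat} := [ffun q => (q == p)%:R].

Section LopTh.
Variables (P Q : finType).
Implicit Types (K : P -> {ffun Q -> rat}) (x y : {ffun P -> rat}).

Lemma lopD K x y : lop K (x + y) = lop K x + lop K y.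
Proof.
apply/ffunP => q; rewrite !ffunE -big_split /=; apply: eq_bigr => p _.
by rewrite ffunE mulrDl.
Qed.

Lemma lop0 K : lop K 0 = 0.
Proof. by apply/ffunP => q; rewrite !ffunE big1 // => p _; rewrite ffunE mul0r. Qed.

Lemma lop_sum K I (r : seq I) (F : I -> {ffun P -> rat}) :
  lop K (\sum_(i <- r) F i) = \sum_(i <- r) lop K (F i).
Proof. exact: (big_morph _ (lopD K) (lop0 K)). Qed.

Lemma lopZ K c x : lop K (sc c x) = sc c (lop K x).
Proof.
apply/ffunP=> q; rewrite !ffunE mulr_sumr; apply: eq_bigr => p _.
by rewrite ffunE mulrA.
Qed.

Lemma lop_ind K p : lop K (ind p) = K p.
Proof.
apply/ffunP=> q; rewrite ffunE (bigD1 p) //= big1 ?addr0.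
  by rewrite ffunE eqxx mul1r.
by move=> p' /negbTE; rewrite ffunE => ->; rewrite mul0r.
Qed.

Lemma lop_ext K1 K2 x : (forall p, K1 p = K2 p) -> lop K1 x = lop K2 x.
Proof. by move=> e; apply/ffunP => q; rewrite !ffunE; apply: eq_bigr => p _; rewrite e. Qed.

Lemma lop_id x : lop (@ind P) x = x.
Proof.
apply/ffunP=> q; rewrite ffunE (bigD1 q) //= big1 ?addr0.
  by rewrite ffunE eqxx mulr1.
by move=> p' /negbTE; rewrite ffunE eq_sym => ->; rewrite mulr0.
Qed.

Lemma lop_kD K1 K2 x : lop (fun p => K1 p + K2 p) x = lop K1 x + lop K2 x.
Proof.
apply/ffunP => q; rewrite !ffunE -big_split /=; apply: eq_bigr => p _.
by rewrite ffunE mulrDr.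
Qed.

Lemma lop_ksum I (r : seq I) (F : I -> P -> {ffun Q -> rat}) x :
  lop (fun p => \sum_(i <- r) F i p) x = \sum_(i <- r) lop (F i) x.
Proof.
apply/ffunP => q; rewrite ffunE sum_ffunE.
under eq_bigr do rewrite sum_ffunE mulr_sumr.
rewrite exchange_big /=; apply: eq_bigr => i _; rewrite ffunE; done.
Qed.

Lemma lop_kZ K c x : lop (fun p => sc c (K p)) x = sc c (lop K x).
Proof.
apply/ffunP=> q; rewrite !ffunE mulr_sumr; apply: eq_bigr => p _.
by rewrite ffunE mulrCA.
Qed.

Lemma scD c x y : sc c (x + y) = sc c x + sc c y.
Proof. by apply/ffunP => q; rewrite !ffunE mulrDr. Qed.

End LopTh.

Lemma lop_comp (P Q R : finType) (K1 : P -> {ffun Q -> rat}) (K2 : Q -> {ffun R -> rat}) x :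
  lop K2 (lop K1 x) = lop (fun p => lop K2 (K1 p)) x.
Proof.
apply/ffunP => r; rewrite !ffunE.
under eq_bigr do rewrite ffunE mulr_suml.
rewrite exchange_big /=; apply: eq_bigr => p _; rewrite ffunE mulr_sumr.
by apply: eq_bigr => q _; rewrite mulrA.
Qed.

Section BarS.
Variable m : nat.

Definition fcons k (g : 'Z_m) (gs : {ffun 'I_k -> 'Z_m}) : {ffun 'I_k.+1 -> 'Z_m} :=
  [ffun j => if unlift ord0 j is Some j' then gs j' else g].

Lemma fcons_inord d g (gs : {ffun 'I_d.+1 -> 'Z_m}) n : (n <= d.+1)%N ->
  fcons g gs (inord n) = if n is n'.+1 then gs (inord n') else g.
Proof.
case: n => [|n] Hn; rewrite ffunE.
  by rewrite (_ : inord 0 = ord0) ?unlift_none //; apply/val_inj; rewrite /= inordK.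
rewrite (_ : inord n.+1 = lift ord0 (inord n : 'I_d.+1)) ?liftK //.
by apply/val_inj; rewrite /= /bump /= !inordK.
Qed.

Lemma fcons_val d g (gs : {ffun 'I_d.+1 -> 'Z_m}) (j : 'I_d.+2) :
  fcons g gs j = if (j : nat) is n'.+1 then gs (inord n') else g.
Proof. by rewrite -{1}(inord_val j) fcons_inord // -ltnS. Qed.

Lemma face0 d g (gs : {ffun 'I_d.+1 -> 'Z_m}) : face 0 (fcons g gs) = gs.
Proof.
apply/ffunP => j; rewrite ffunE /= fcons_inord ?inord_val //.
Qed.

Lemma fcons0 k g (gs : {ffun 'I_k -> 'Z_m}) : fcons g gs ord0 = g.
Proof. by rewrite ffunE unlift_none. Qed.
Lemma fconsL k g (gs : {ffun 'I_k -> 'Z_m}) j : fcons g gs (lift ord0 j) = gs j.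
Proof. by rewrite ffunE liftK. Qed.

Lemma face1 d g (gs : {ffun 'I_d.+1 -> 'Z_m}) :
  face 1 (fcons g gs) = fcons (g + gs (inord 0)) (face 0 gs).
Proof.
apply/ffunP => j; case: (unliftP ord0 j) => [j'|] -> ; rewrite ?fcons0 ?fconsL.
  rewrite [LHS]ffunE [RHS]ffunE /= /bump /= fcons_inord //.
  by rewrite add1n ltnS ltn_ord.
by rewrite ffunE /= !fcons_inord.
Qed.

Lemma faceS d g (gs : {ffun 'I_d.+1 -> 'Z_m}) i : (0 < i)%N ->
  face i.+1 (fcons g gs) = fcons g (face i gs).
Proof.
move=> Hi; apply/ffunP => j; case: (unliftP ord0 j) => [j'|] -> ; rewrite ?fcons0 ?fconsL.
  rewrite ffunE [RHS]ffunE /= /bump /= !add1n !ltnS !eqSS.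
  have hj : (j' < d)%N := ltn_ord j'.
  by rewrite !fcons_inord //; apply: leq_trans hj _.
by rewrite ffunE /= ltnS Hi fcons_inord.
Qed.

End BarS.

Section BarT.
Variable m : nat.

Definition sop k (x : Bar m k) : Bar m k.+1 :=
  lop (fun p => bas (0, fcons p.1 p.2)) x.

Definition Kbd k (p : 'Z_m * {ffun 'I_k.+1 -> 'Z_m}) : Bar m k :=
  \sum_(i < k.+2) sc ((-1) ^+ i)
     (bas (if i == 0 :> nat then p.1 + p.2 (inord 0) else p.1, face i p.2)).

Lemma bdE k (x : Bar m k.+1) : bd x = lop (@Kbd k) x.
Proof.
apply/ffunP => q; rewrite !ffunE; apply: eq_bigr => p _.
by rewrite /Kbd sum_ffunE; apply: congr1; apply: eq_bigr => i _; rewrite [in RHS]ffunE.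
Qed.

Lemma bump0 j : bump 0 j = j.+1.
Proof. by rewrite /bump add1n. Qed.

Lemma key d (g : 'Z_m) (gs : {ffun 'I_d.+1 -> 'Z_m}) :
  Kbd (0, fcons g gs) +
  \sum_(i < d.+2) sc ((-1) ^+ i) (bas (0, fcons (if i == 0 :> nat then g + gs (inord 0) else g) (face i gs)))
  = bas (g, gs).
Proof.
rewrite /Kbd big_ord_recl big_ord_recl [X in _ + X = _]big_ord_recl /=.
rewrite face0 face1 bump0 add0r fcons_inord //.
under eq_bigr => i _ do rewrite !bump0 faceS //.
under [X in _ + (_ + X) = _]eq_bigr => i _ do rewrite !bump0.
set B := bas (0, _).
set b := bas (g, gs).
set S1 := \sum_(i < d.+1) _.
set S2 := \sum_(i < d.+1) _.
have -> : S1 = - S2.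
  rewrite /S1 /S2 -sumrN; apply: eq_bigr => i _; apply/ffunP => q.
  by rewrite !ffunE exprS mulN1r mulNr.
have -> : sc ((-1) ^+ 0) b = b by apply/ffunP => q; rewrite !ffunE mul1r.
have -> : sc ((-1) ^+ 1) B = - B by apply/ffunP => q; rewrite !ffunE mulN1r.
have -> : sc ((-1) ^+ 0) B = B by apply/ffunP => q; rewrite !ffunE mul1r.
by rewrite -opprD addrNK.
Qed.

Lemma homotopy d (x : Bar m d.+1) : x = bd (sop x) + sop (bd x).
Proof.
rewrite !bdE /sop !lop_comp -[x in x = _]lop_id -lop_kD; apply: lop_ext => [[g gs]].
rewrite lop_ind /Kbd lop_sum /=; transitivity (bas (g, gs)); first by []. rewrite -(key g gs) /Kbd; congr (_ + _).
by apply: eq_bigr => i _; rewrite lopZ lop_ind. Qed.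
End BarT.

Section Add.
Variables (U V : zmodType) (f : U -> V).
Hypothesis Hf : additive_map f.
Lemma am0 : f 0 = 0.
Proof. by apply/eqP; rewrite -(subrr (f 0)) -{2}(addr0 0) Hf addrK. Qed.
Lemma amsum I (r : seq I) (F : I -> U) : f (\sum_(i <- r) F i) = \sum_(i <- r) f (F i).
Proof. exact: (big_morph _ Hf am0). Qed.
Lemma amN x : f (- x) = - f x.
Proof. by apply/eqP; rewrite -subr_eq0 opprK -Hf addNr am0. Qed.
Lemma amMn x n : f (x *+ n) = f x *+ n.
Proof. by elim: n => [|n IH]; rewrite ?mulr0n ?am0 // !mulrS Hf IH. Qed.
End Add.

Section BarU.
Variable m : nat.
Lemma barGE n h (x : Bar m n) : barG h x = lop (fun p => bas (h + p.1, p.2)) x.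
Proof. by []. Qed.

Lemma barG_bd k h (x : Bar m k.+1) : barG h (bd x) = bd (barG h x).
Proof.
rewrite !barGE !bdE !lop_comp; apply: lop_ext => p.
rewrite lop_ind /Kbd lop_sum; apply: eq_bigr => i _; rewrite lopZ lop_ind /=.
by case: ifP => _ //; rewrite addrA.
Qed.

Lemma barG_comp n a b (x : Bar m n) : barG a (barG b x) = barG (a + b) x.
Proof. by rewrite !barGE lop_comp; apply: lop_ext => p; rewrite lop_ind /= addrA. Qed.

Lemma barG0 n (x : Bar m n) : barG 0 x = x.
Proof. by rewrite barGE -[RHS]lop_id; apply: lop_ext => p; rewrite add0r -surjective_pairing. Qed.
End BarU.

Section BarGam.
Variables (Gam : groupType) (m : nat) (actZ : Gam -> 'Z_m -> 'Z_m).
Hypothesis HZ : acts_by_automorphisms actZ.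

Lemma barGamE n s (x : Bar m n) :
  barGam actZ s x = lop (fun p : 'Z_m * {ffun 'I_n -> 'Z_m} => bas (actZ s p.1, [ffun i => actZ s (p.2 i)])) x.
Proof. by []. Qed.

Lemma fcons_map k s g (gs : {ffun 'I_k -> 'Z_m}) :
  [ffun i => actZ s (fcons g gs i)] = fcons (actZ s g) [ffun i => actZ s (gs i)].
Proof.
apply/ffunP => j; rewrite !ffunE; case: (unlift ord0 j) => [j'|] //.
by rewrite ffunE.
Qed.

Lemma barGam_sop n s (x : Bar m n) : barGam actZ s (sop x) = sop (barGam actZ s x).
Proof.
rewrite !barGamE /sop !lop_comp; apply: lop_ext => p; rewrite !lop_ind /=.
by rewrite fcons_map (am0 (HZ.2 s)).
Qed.

Lemma barG_barGam n s b (x : Bar m n) :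
  barG (actZ s b) (barGam actZ s x) = barGam actZ s (barG b x).
Proof.
rewrite !barGamE barGE !lop_comp; apply: lop_ext => p; rewrite !lop_ind /=.
by rewrite HZ.2.
Qed.

Lemma actZK s : cancel (actZ s) (actZ s^-1).
Proof. by move=> g; rewrite -(HZ.1.2) mulVg HZ.1.1. Qed.
End BarGam.

Section Vanish.
Variables (Gam : groupType) (m : nat) (A : zmodType).
Variables (actZ : Gam -> 'Z_m -> 'Z_m) (actG : 'Z_m -> A -> A) (actA : Gam -> A -> A).
Hypotheses (Hm : (1 < m)%N) (HZ : acts_by_automorphisms actZ)
  (HA : semidirect_module actZ actG actA).

Let c : rat := (m%:R)^-1.

Lemma scK n (x : Bar m n) : (sc c x) *+ m = x.
Proof.
apply/ffunP => q; rewrite ffunMnE ffunE -mulrnAl -mulr_natr mulVf ?mul1r //.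
by rewrite Num.Theory.pnatr_eq0 -lt0n (ltnW Hm).
Qed.

Lemma card_Zm : #|'Z_m| = m.
Proof. by rewrite card_ord Zp_cast. Qed.

Lemma barG_sc n h (x : Bar m n) : barG h (sc c x) = sc c (barG h x).
Proof. by rewrite !barGE lopZ. Qed.

Lemma bd_sc k (x : Bar m k.+1) : sc c (bd x) = bd (sc c x).
Proof. by rewrite !bdE lopZ. Qed.

Lemma barGam_sc n s (x : Bar m n) : barGam actZ s (sc c x) = sc c (barGam actZ s x).
Proof. by rewrite !barGamE lopZ. Qed.

Lemma vanish d (phi : Bar m d.+1 -> A) :
  is_cocycle actZ actG actA phi -> is_coboundary actZ actG actA phi.
Proof.
case: HA => HG0 HGM HGadd [HAact HAadd] Hcomp.
move=> [[Padd PG PGam] Pcoc].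
pose psi (y : Bar m d) : A :=
  \sum_(h : 'Z_m) actG h (phi (sop (barG (-h) (sc c y)))).
exists psi; split; first split.
- move=> x y; rewrite /psi -big_split /=; apply: eq_bigr => h _.
  by rewrite scD !barGE lopD -!barGE /sop lopD Padd HGadd.
- move=> g x; rewrite /psi (amsum (HGadd g)) (reindex_inj (addrI g)) /=.
  apply: eq_bigr => h _.
  rewrite -HGM barG_sc barG_comp -barG_sc.
  by rewrite opprD addrAC addNr add0r.
- move=> s x; rewrite /psi (amsum (HAadd s)) (reindex_inj (can_inj (actZK HZ s))) /=.
  apply: eq_bigr => h _.
  by rewrite -barGam_sc -(amN (HZ.2 s)) (barG_barGam HZ) -(barGam_sop HZ) PGam -Hcomp.
- move=> x; rewrite /psi.
  under eq_bigr => h _.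
    rewrite bd_sc barG_bd.
    have -> : forall w, phi (sop (bd w)) = phi w.
      by move=> w; rewrite {2}(homotopy w) Padd Pcoc add0r.
    rewrite PG -HGM subrr HG0.
  over.
  by rewrite sumr_const card_Zm -(amMn Padd) scK.
Qed.
End Vanish.

Lemma sc0 (T : finType) c : sc c (0 : {ffun T -> rat}) = 0.
Proof. by apply/ffunP => q; rewrite !ffunE mulr0. Qed.
Lemma sc_sum (T : finType) c I (r : seq I) (F : I -> {ffun T -> rat}) :
  sc c (\sum_(i <- r) F i) = \sum_(i <- r) sc c (F i).
Proof. exact: (big_morph _ (@scD _ c) (sc0 _ c)). Qed.
Lemma scB (T : finType) c (x y : {ffun T -> rat}) : sc c (x - y) = sc c x - sc c y.
Proof. by apply/ffunP => q; rewrite !ffunE mulrBr. Qed.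
Lemma scM (T : finType) a b (x : {ffun T -> rat}) : sc a (sc b x) = sc (a * b) x.
Proof. by apply/ffunP => q; rewrite !ffunE mulrA. Qed.
Lemma sc1 (T : finType) (x : {ffun T -> rat}) : sc 1 x = x.
Proof. by apply/ffunP => q; rewrite !ffunE mul1r. Qed.

Section WSide.
Variables (m : nat) (t : 'Z_m).
Hypothesis Hm : (1 < m)%N.
Let c : rat := (m%:R)^-1.

Lemma mnz : (m%:R : rat) != 0.
Proof. by rewrite Num.Theory.pnatr_eq0 -lt0n (ltnW Hm). Qed.

Lemma trQE h (x : QZ m) : trQ h x = lop (fun g => basQ (h + g)) x.
Proof. by []. Qed.

Lemma trQ_sc h (x : QZ m) a : trQ h (sc a x) = sc a (trQ h x).
Proof. by rewrite !trQE lopZ. Qed.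

Lemma mulN_sc (x : QZ m) a : mulN t (sc a x) = sc a (mulN t x).
Proof. by rewrite /mulN sc_sum; apply: eq_bigr => i _; rewrite trQ_sc. Qed.

Lemma mulD_eq (x : QZ m) : mulD t x = mulN t x - sc (m%:R) x.
Proof.
rewrite /mulD /mulN (big_ltn (ltnW Hm)) mulr0n.
have -> : trQ 0 x = x by rewrite trQE -[RHS]lop_id; apply: lop_ext => g; rewrite add0r.
apply/ffunP => q; rewrite !ffunE.
have hm : (m%:R : rat) = (m.-1)%:R + 1.
  by rewrite natr1 prednK // ltnW.
rewrite hm.
ring.
Qed.
End WSide.

Section MainS.
Variables (m : nat) (Gam : groupType) (A : zmodType) (t : 'Z_m).
Variables (actZ : Gam -> 'Z_m -> 'Z_m) (actG : 'Z_m -> A -> A) (actA : Gam -> A -> A).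
Hypotheses (Hm : (1 < m)%N) (HZ : acts_by_automorphisms actZ)
  (HA : semidirect_module actZ actG actA).

Lemma gamQ_sc s (x : QZ m) a : gamQ actZ s (sc a x) = sc a (gamQ actZ s x).
Proof. by rewrite /gamQ -/(lop _ _) lopZ. Qed.

Lemma W0 : is_W actZ actG actA (fun _ => 0).
Proof.
case: HA => HG0 HGM HGadd [HAact HAadd] Hcomp.
split; first by move=> x y; rewrite addr0.
- by move=> h x; rewrite (am0 (HGadd h)).
- by move=> s x; rewrite (am0 (HAadd s)).
Qed.

Lemma W_sc (y : QZ m -> A) a : is_W actZ actG actA y ->
  is_W actZ actG actA (fun x => y (sc a x)) /\ is_W actZ actG actA (fun x => - y (sc a x)).
Proof.
case: HA => HG0 HGM HGadd [HAact HAadd] Hcomp.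
case=> Yadd YG YGam; split; split.
- by move=> x x'; rewrite scD Yadd.
- by move=> h x; rewrite -trQ_sc YG.
- by move=> s x; rewrite -gamQ_sc YGam.
- by move=> x x'; rewrite scD Yadd opprD.
- by move=> h x; rewrite -trQ_sc YG (amN (HGadd h)).
- by move=> s x; rewrite -gamQ_sc YGam (amN (HAadd s)).
Qed.

Lemma coc0 k : is_cocycle actZ actG actA (n := k) (fun _ => 0).
Proof.
case: HA => HG0 HGM HGadd [HAact HAadd] Hcomp.
split; last by [].
split; first by move=> x y; rewrite addr0.
- by move=> h x; rewrite (am0 (HGadd h)).
- by move=> s x; rewrite (am0 (HAadd s)).
Qed.

Lemma iso_gen k (ZY BY : (QZ m -> A) -> Prop) :
  (0 < k)%N -> ZY (fun _ => 0) -> BY (fun _ => 0) ->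
  (forall y, ZY y -> BY (W_sub y (fun _ => 0))) ->
  subquot_iso (@cochain_add _ _ k) (@W_add m A) (@W_sub m A)
      (is_cocycle actZ actG actA (n := k)) (is_coboundary actZ actG actA (n := k)) ZY BY.
Proof.
move=> Hk Z0 B0 Hsurj.
exists (fun _ => fun _ => 0); split.
- by [].
- by move=> x y _ _; apply: functional_extensionality => q; rewrite /W_add addr0.
- move=> x Hx; split => // _.
  by case: k Hk x Hx => [//|d] _ x Hx; apply: (vanish Hm HZ HA).
- by move=> y Hy; exists (fun _ => 0); split; [apply: coc0 | apply: Hsurj].
Qed.

Let c : rat := (m%:R)^-1.

Lemma isoN k : (0 < k)%N ->
  subquot_iso (@cochain_add _ _ k) (@W_add m A) (@W_sub m A)
      (is_cocycle actZ actG actA (n := k)) (is_coboundary actZ actG actA (n := k))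
      (KerN actZ actG actA t) (ImD actZ actG actA t).
Proof.
move=> Hk; apply: iso_gen => //.
- by split; [exact: W0 | by []].
- by exists (fun _ => 0); split; [exact: W0 | by []].
move=> y [Wy Ny]; exists (fun x => - y (sc c x)); split; first exact: (W_sc c Wy).2.
case: Wy => Yadd _ _ x.
rewrite /W_sub subr0 mulD_eq // scB -mulN_sc scM mulVf ?mnz // sc1.
by rewrite Yadd (amN Yadd) Ny sub0r opprK.
Qed.

Lemma isoD k : (0 < k)%N ->
  subquot_iso (@cochain_add _ _ k) (@W_add m A) (@W_sub m A)
      (is_cocycle actZ actG actA (n := k)) (is_coboundary actZ actG actA (n := k))
      (KerD actZ actG actA t) (ImN actZ actG actA t).
Proof.
move=> Hk; apply: iso_gen => //.
- by split; [exact: W0 | by []].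
- by exists (fun _ => 0); split; [exact: W0 | by []].
move=> y [Wy Dy]; exists (fun x => y (sc c x)); split; first exact: (W_sc c Wy).1.
case: Wy => Yadd _ _ x.
rewrite /W_sub subr0 -mulN_sc.
have -> : mulN t (sc c x) = mulD t (sc c x) + x.
  by rewrite mulD_eq // scM mulfV ?mnz // sc1 subrK.
by rewrite Yadd Dy add0r.
Qed.
End MainS.

Unset Implicit Arguments.
Set Strict Implicit.
Theorem theorem4p4 (m : nat) (Gam : groupType) (A : zmodType) (t : 'Z_m)
    (actZ : Gam -> 'Z_m -> 'Z_m) (actG : 'Z_m -> A -> A) (actA : Gam -> A -> A) :
  (1 < m)%N ->
  generates t ->
  acts_by_automorphisms actZ ->
  (exists (s : Gam) (g : 'Z_m), actZ s g != g) ->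
  semidirect_module actZ actG actA ->
  forall n : nat, (0 < n)%N ->
    subquot_iso (@cochain_add _ _ (2 * n - 1)) (@W_add m A) (@W_sub m A)
      (is_cocycle actZ actG actA (n := 2 * n - 1)) (is_coboundary actZ actG actA (n := 2 * n - 1))
      (KerN actZ actG actA t) (ImD actZ actG actA t)
    /\
    subquot_iso (@cochain_add _ _ (2 * n)) (@W_add m A) (@W_sub m A)
      (is_cocycle actZ actG actA (n := 2 * n)) (is_coboundary actZ actG actA (n := 2 * n))
      (KerD actZ actG actA t) (ImN actZ actG actA t).
Proof.
move=> Hm _ HZ _ HA n Hn; split.
  apply: isoN => //; case: n Hn => // n _; rewrite mulnS.
  by rewrite addSn subn1.
by apply: isoD => //; rewrite muln_gt0.
Qed.
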